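(* Let $A\in\mathbb{R}^{m\times n}$, $b\in\mathbb{R}^m$ and $\delta\ge 0$, and assume $\{x\in\mathbb{R}^n:\|Ax-b\|\le\delta\}\neq\emptyset$. Then for every $\rho>0$ the problem $$\min_{x,v\in\mathbb{R}^n}\{\langle e,e-v\rangle+\rho\langle v,|x|\rangle:\ \|Ax-b\|\le\delta,\ 0\le v\le e\}$$ has a nonempty set of (globally) optimal solutions.
   Context: $\|\cdot\|$ is the Euclidean norm, $e\in\mathbb{R}^n$ is the all-ones vector, $|x|$ is the componentwise absolute value, and vector inequalities are componentwise. *)

(* Defs.v *)
From HB Require Import structures.
From mathcomp Require Import all_boot all_order all_algebra.
From mathcomp Require Import reals.
Set Implicit Arguments. Unset Strict Implicit. Unset Printing Implicit Defensive.
Import Order.TTheory GRing.Theory Num.Theory.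
Local Open Scope ring_scope.

Definition enorm (R : realType) (k : nat) (u : 'cV[R]_k) : R :=
  Num.sqrt (\sum_(i < k) (u i 0) ^+ 2).

Definition dotv (R : realType) (k : nat) (u w : 'cV[R]_k) : R :=
  \sum_(i < k) u i 0 * w i 0.

Definition onesv (R : realType) (k : nat) : 'cV[R]_k := const_mx 1.

Definition absv (R : realType) (k : nat) (u : 'cV[R]_k) : 'cV[R]_k :=
  map_mx (fun a => `|a|) u.

Definition objective (R : realType) (n : nat) (rho : R) (x v : 'cV[R]_n) : R :=
  dotv (onesv R n) (onesv R n - v) + rho * dotv v (absv x).

Definition feasible (R : realType) (m n : nat) (A : 'M[R]_(m, n)) (b : 'cV[R]_m)
  (delta : R) (x v : 'cV[R]_n) : Prop :=
  enorm (A *m x - b) <= delta /\ (forall i, 0 <= v i 0 <= 1).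

(* Main.v *)
Require Import Defs.
From HB Require Import structures.
From mathcomp Require Import all_boot all_order all_algebra.
From mathcomp Require Import reals lra.
From mathcomp Require Import all_classical all_reals all_analysis.
Import Order.TTheory GRing.Theory Num.Theory.
Import numFieldTopology.Exports numFieldNormedType.Exports.
Set Implicit Arguments. Unset Strict Implicit. Unset Printing Implicit Defensive.
Local Open Scope ring_scope.


Lemma coord_le_enorm (R : realType) k (u : 'cV[R]_k) i : `|u i 0| <= enorm u.
Proof.
rewrite /enorm -sqrtr_sqr ler_sqrt; last by apply: sumr_ge0 => j _; exact: sqr_ge0.
rewrite (bigD1 i) //= lerDl; apply: sumr_ge0 => j _; exact: sqr_ge0.
Qed.

Definition gS (R : realType) n (S : {set 'I_n}) (x : 'cV[R]_n) : R :=
  \sum_(i in S) `|x i 0|.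

Definition DS (R : realType) n (S : {set 'I_n}) : 'M[R]_n :=
  diag_mx (\row_i ((i \in S)%:R)).

Lemma DS_entry (R : realType) n (S : {set 'I_n}) (x : 'cV[R]_n) i :
  (DS R S *m x) i 0 = (i \in S)%:R * x i 0.
Proof. by rewrite /DS mul_diag_mx !mxE. Qed.

Lemma DS_gS (R : realType) n (S : {set 'I_n}) (x y : 'cV[R]_n) :
  DS R S *m x = DS R S *m y -> gS S x = gS S y.
Proof.
move=> E; apply: eq_bigr => i iS.
have := congr1 (fun M : 'cV[R]_n => M i 0) E; rewrite !DS_entry iS !mul1r => -> //.
Qed.

Lemma DS_le (R : realType) n (S : {set 'I_n}) (x : 'cV[R]_n) i :
  `|(DS R S *m x) i 0| <= gS S x.
Proof.
rewrite DS_entry; case: (boolP (i \in S)) => iS.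
  by rewrite mul1r /gS (bigD1 i) //= lerDl sumr_ge0.
by rewrite mul0r normr0 sumr_ge0.
Qed.

Section Proj.
Variables (R : realType) (m n : nat) (A : 'M[R]_(m, n)) (S : {set 'I_n}).
Definition NN : 'M[R]_(m + n, n) := col_mx A (DS R S).
Definition PP : 'M[R]_(n, m + n) := (pinvmx (NN^T))^T.

Lemma PP_spec (x : 'cV[R]_n) : NN *m (PP *m (NN *m x)) = NN *m x.
Proof.
apply: trmx_inj.
rewrite !trmx_mul.
have -> : PP^T = pinvmx NN^T by rewrite /PP trmxK.
have H : ((x^T *m NN^T) <= NN^T)%MS by exact: submxMl.
by move: (mulmxKpV H); rewrite /pinvmx !mulmxA.
Qed.

Lemma PP_A (x : 'cV[R]_n) : A *m (PP *m (NN *m x)) = A *m x.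
Proof.
by have := PP_spec x; rewrite /NN !mul_col_mx => /eq_col_mx [].
Qed.

Lemma PP_D (x : 'cV[R]_n) : DS R S *m (PP *m (NN *m x)) = DS R S *m x.
Proof.
by have := PP_spec x; rewrite /NN !mul_col_mx => /eq_col_mx [].
Qed.

Lemma NN_bound (x : 'cV[R]_n) (b : 'cV[R]_m) k :
  `|(NN *m x) k 0| <= enorm (A *m x - b) + gS S x + \sum_i `|b i 0|.
Proof.
have e0 : 0 <= enorm (A *m x - b) by rewrite /enorm sqrtr_ge0.
have g0 : 0 <= gS S x by rewrite sumr_ge0.
have b0 : 0 <= \sum_i `|b i 0| by rewrite sumr_ge0.
rewrite /NN mul_col_mx; case: (splitP k) => k' Hk.
- have -> : k = lshift n k' by apply: val_inj; rewrite /= Hk.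
  rewrite col_mxEu.
  have -> : (A *m x) k' 0 = (A *m x - b) k' 0 + b k' 0 by rewrite !mxE subrK.
  apply: le_trans (ler_normD _ _) _.
  have h1 := coord_le_enorm (A *m x - b) k'.
  have h2 : `|b k' 0| <= \sum_i `|b i 0| by rewrite (bigD1 k') //= lerDl sumr_ge0.
  lra.
- have -> : k = rshift m k' by apply: val_inj; rewrite /= Hk.
  rewrite col_mxEd.
  have := DS_le S x k'; lra.
Qed.
End Proj.

Local Open Scope classical_set_scope.
Local Open Scope ring_scope.


Lemma cont_f2 (R : realType) n (S : {set 'I_n}) :
  continuous (fun r : 'rV[R]_n => gS S r^T).
Proof.
have -> : (fun r : 'rV[R]_n => gS S r^T) = (fun r => \sum_(i in S) `|r 0 i|).
  by apply: funext => r; apply: eq_bigr => i _; rewrite mxE.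
apply: continuous_big => //; first exact: add_continuous.
move=> i _ r.
apply: (@continuous_comp _ _ _ (fun r : 'rV[R]_n => r 0 i) Num.norm); first exact: coord_continuous.
exact: norm_continuous.
Qed.

Lemma cont_f1 (R : realType) m n (A : 'M[R]_(m, n)) (b : 'cV[R]_m) :
  continuous (fun r : 'rV[R]_n => enorm (A *m r^T - b)).
Proof.
have -> : (fun r : 'rV[R]_n => enorm (A *m r^T - b)) =
   (fun r => Num.sqrt (\sum_i ((\sum_j A i j * r 0 j - b i 0) * (\sum_j A i j * r 0 j - b i 0)))).
  apply: funext => r; rewrite /enorm; congr Num.sqrt; apply: eq_bigr => i _.
  rewrite expr2 !mxE; congr (_ * _); congr (_ - _); apply: eq_bigr => j _; rewrite !mxE //.
have hc : forall i, continuous (fun r : 'rV[R]_n => \sum_j A i j * r 0 j - b i 0).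
  move=> i r; apply: continuousB; last exact: cst_continuous.
  apply: (continuous_big (op := +%R)) => //; first exact: add_continuous.
  move=> j _ r'; apply: (@continuousM _ _ (fun=> A i j) (fun r : 'rV[R]_n => r 0 j)).
    exact: cst_continuous.
  exact: coord_continuous.
move=> r.
apply: (continuous_comp _ (@sqrt_continuous R _)).
apply: (continuous_big (op := +%R)) => //; first exact: add_continuous.
move=> i _ r'; apply: (@continuousM _ _ (fun r : 'rV[R]_n => \sum_j A i j * r 0 j - b i 0) (fun r : 'rV[R]_n => \sum_j A i j * r 0 j - b i 0)); exact: hc.
Qed.

Lemma Py_bound (R : realType) m n (A : 'M[R]_(m, n)) (b : 'cV[R]_m) (S : {set 'I_n})
  (M : R) (y : 'cV[R]_n) i :
  enorm (A *m y - b) + gS S y + \sum_i `|b i 0| <= M ->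
  `|(PP A S *m (NN A S *m y)) i 0| <= \sum_k `|PP A S i k| * M.
Proof.
move=> HM; rewrite mxE; apply: le_trans (ler_norm_sum _ _ _) _.
apply: ler_sum => k _; rewrite normrM; apply: ler_wpM2l => //.
apply: le_trans HM; exact: NN_bound.
Qed.

Lemma attain (R : realType) m n (A : 'M[R]_(m, n)) (b : 'cV[R]_m) (delta : R)
  (S : {set 'I_n}) :
  (exists x : 'cV[R]_n, enorm (A *m x - b) <= delta) ->
  exists xS : 'cV[R]_n, enorm (A *m xS - b) <= delta /\
    forall y, enorm (A *m y - b) <= delta -> gS S xS <= gS S y.
Proof.
move=> [x0 Hx0].
pose g0 := gS S x0.
pose M := delta + g0 + \sum_i `|b i 0|.
pose C i := \sum_k `|PP A S i k| * M.
pose proj (y : 'cV[R]_n) := PP A S *m (NN A S *m y).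
have projA y : A *m proj y = A *m y by exact: PP_A.
have projg y : gS S (proj y) = gS S y by apply: DS_gS; exact: PP_D.
have projC y : enorm (A *m y - b) <= delta -> gS S y <= g0 ->
    forall i, `|proj y i 0| <= C i.
  move=> h1 h2 i; apply: Py_bound; rewrite /M; apply: lerD => //; exact: lerD.
pose K1 := [set r : 'rV[R]_n | forall i, `[- C i, C i]%classic (r 0 i)].
pose K2 := [set r : 'rV[R]_n | enorm (A *m r^T - b) <= delta] `&` [set r : 'rV[R]_n | gS S r^T <= g0].
have cK1 : compact K1.
  have h := @rV_compact R n (fun i => `[- C i, C i]%classic) (fun i => @segment_compact R (- C i) (C i)).
  exact h.
have clK2 : closed K2.
  have H1 : closed [set r : 'rV[R]_n | enorm (A *m r^T - b) <= delta].
    apply: (@preimage_closed _ _ (fun r : 'rV[R]_n => enorm (A *m r^T - b)) [set x | x <= delta]).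
      by move=> r _; exact: cont_f1.
    exact: closed_le.
  have H2 : closed [set r : 'rV[R]_n | gS S r^T <= g0].
    apply: (@preimage_closed _ _ (fun r : 'rV[R]_n => gS S r^T) [set x | x <= g0]).
      by move=> r _; exact: cont_f2.
    exact: closed_le.
  exact: (closedI H1 H2).
have inK y : enorm (A *m y - b) <= delta -> gS S y <= g0 -> (K1 `&` K2) (proj y)^T.
  move=> h1 h2; split; last (split; rewrite /= trmxK ?projA ?projg //).
  move=> i /=; rewrite mxE in_itv /= -ler_norml; exact: projC.
have ne : (K1 `&` K2) !=set0 by exists (proj x0)^T; apply: inK => //; rewrite /g0.
have cw : {within K1 `&` K2, continuous (fun r : 'rV[R]_n => gS S r^T)}.
  by apply: continuous_subspaceT; exact: cont_f2.
have [c cK cmin] := EVT_min_rV ne (compact_closedI cK1 clK2) cw.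
move: cK; rewrite inE => -[_ [c1 c2]].
exists c^T; split => // y Hy.
have [hy|hy] := leP (gS S y) g0.
  rewrite -(projg y) -[proj y](trmxK).
  by apply: cmin; rewrite inE; apply: inK.
by apply: le_trans c2 _; apply: ltW.
Qed.

Definition val (R : realType) n (rho : R) (S : {set 'I_n}) (x : 'cV[R]_n) : R :=
  \sum_i (if i \in S then rho * `|x i 0| else 1).

Lemma val_split (R : realType) n (rho : R) (S : {set 'I_n}) (x : 'cV[R]_n) :
  val rho S x = rho * gS S x + \sum_(i | i \notin S) 1.
Proof.
rewrite /val (bigID (fun i => i \in S)) /= /gS mulr_sumr; congr (_ + _).
  by apply: eq_bigr => i ->.
by apply: eq_bigr => i /negbTE ->.
Qed.

Lemma objE (R : realType) n (rho : R) (y w : 'cV[R]_n) :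
  objective rho y w = \sum_i ((1 - w i 0) + rho * (w i 0 * `|y i 0|)).
Proof.
rewrite /objective /dotv mulr_sumr -big_split /=; apply: eq_bigr => i _.
by rewrite !mxE mul1r.
Qed.

Lemma obj_ge (R : realType) n (rho : R) (y w : 'cV[R]_n) :
  0 < rho -> (forall i, 0 <= w i 0 <= 1) ->
  val rho [set i | rho * `|y i 0| < 1] y <= objective rho y w.
Proof.
move=> rho0 hw; rewrite objE /val; apply: ler_sum => i _.
rewrite inE; have /andP [w0 w1] := hw i.
have ya : 0 <= `|y i 0| by [].
case: ifP => h.
  nra.
rewrite ltNge in h; move/negbFE: h => h; nra.
Qed.

Lemma obj_ind (R : realType) n (rho : R) (S : {set 'I_n}) (x : 'cV[R]_n) :
  objective rho x (\col_i ((i \in S)%:R)) = val rho S x.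
Proof.
rewrite objE /val; apply: eq_bigr => i _; rewrite mxE.
by case: (i \in S); rewrite /= ?subrr ?mul1r ?add0r ?mul0r ?mulr0 ?subr0 ?addr0.
Qed.

Unset Implicit Arguments.
Theorem lemma3p1 (R : realType) (m n : nat) (A : 'M[R]_(m, n)) (b : 'cV[R]_m)
  (delta : R) :
  0 <= delta ->
  (exists x : 'cV[R]_n, enorm (A *m x - b) <= delta) ->
  forall rho : R, 0 < rho ->
  exists x v : 'cV[R]_n,
    feasible A b delta x v /\
    (forall y w : 'cV[R]_n, feasible A b delta y w ->
       objective rho x v <= objective rho y w).
Proof.
move=> d0 hex rho rho0.
have [xf hxf] := fin_all_exists (fun S : {set 'I_n} => attain S hex).
pose F (S : {set 'I_n}) := val rho S (xf S).
have [S0 _ S0min] := @arg_minP _ R _ finset.set0 predT F isT.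
exists (xf S0), (\col_i ((i \in S0)%:R)); split.
  split; first by case: (hxf S0).
  by move=> i; rewrite mxE; case: (i \in S0); rewrite /= ?lexx ?ler01.
move=> y w [hy hw].
apply: (le_trans _ (@obj_ge R n rho y w rho0 hw)).
rewrite obj_ind.
pose T : {set 'I_n} := [set i | rho * `|y i 0| < 1]%SET.
apply: le_trans (S0min T isT) _.
rewrite /F !val_split lerD2r; apply: ler_wpM2l; first exact: ltW.
by case: (hxf T) => _ /(_ y hy).
Qed.
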